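(* Let $\gamma$ be a Hamel basis of $\mathbb{R}$ over $\mathbb{Q}$ with $1\in\gamma$, let $A_\gamma:\mathbb{R}\to\mathbb{R}$ be the unique $\mathbb{Q}$-linear map with $A_\gamma(1)=1$ and $A_\gamma(b)=0$ for all $b\in\gamma\setminus\{1\}$, and let $n\ge1$ be an integer. Then $f_n(x)=A_\gamma(x)^n$ is a discontinuous $n$-monomial function whose graph $\{(x,f_n(x)):x\in\mathbb{R}\}$ is totally disconnected.
   Context: For $h\in\mathbb{R}$, $\Delta_h f(x)=f(x+h)-f(x)$ and $\Delta_h^{n}=\Delta_h\circ\Delta_h^{n-1}$. A function $f:\mathbb{R}\to\mathbb{R}$ is an $n$-monomial function if $\frac{1}{n!}\Delta_h^n f(x)=f(h)$ for all $x,h\in\mathbb{R}$. A subset of $\mathbb{R}^2$ is totally disconnected if all its connected components are singletons. *)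

(* Defs.v *)
From Stdlib Require Import Reals Lra QArith Qreals List Arith.
Open Scope R_scope.

Definition qcomb (l : list (Q * R)) : R :=
  fold_right (fun p acc => Q2R (fst p) * snd p + acc) 0 l.

Definition Q_lin_indep (gamma : R -> Prop) : Prop :=
  forall l : list (Q * R),
    NoDup (map snd l) -> Forall (fun p => gamma (snd p)) l ->
    qcomb l = 0 -> Forall (fun p => (fst p == 0)%Q) l.

Definition Q_spans (gamma : R -> Prop) : Prop :=
  forall x : R, exists l : list (Q * R),
    Forall (fun p => gamma (snd p)) l /\ qcomb l = x.

Definition hamel_basis (gamma : R -> Prop) : Prop :=
  Q_lin_indep gamma /\ Q_spans gamma.

Definition Q_linear (A : R -> R) : Prop :=
  (forall x y, A (x + y) = A x + A y) /\
  (forall (q : Q) x, A (Q2R q * x) = Q2R q * A x).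

Fixpoint deltan (n : nat) (h : R) (f : R -> R) (x : R) : R :=
  match n with
  | O => f x
  | S k => deltan k h f (x + h) - deltan k h f x
  end.

Definition monomial_fun (n : nat) (f : R -> R) : Prop :=
  forall x h, / INR (Factorial.fact n) * deltan n h f x = f h.

Definition dist2 (p q : R * R) : R :=
  sqrt ((fst p - fst q) ^ 2 + (snd p - snd q) ^ 2).

Definition open2 (U : R * R -> Prop) : Prop :=
  forall p, U p -> exists eps, eps > 0 /\ forall q, dist2 p q < eps -> U q.

Definition connected2 (S : R * R -> Prop) : Prop :=
  ~ exists U V : R * R -> Prop,
      open2 U /\ open2 V /\
      (forall p, S p -> U p \/ V p) /\
      (exists p, S p /\ U p) /\ (exists p, S p /\ V p) /\
      (forall p, S p -> U p -> V p -> False).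

Definition component2 (S : R * R -> Prop) (x : R * R) : R * R -> Prop :=
  fun y => exists C : R * R -> Prop,
    (forall p, C p -> S p) /\ connected2 C /\ C x /\ C y.

Definition totally_disconnected2 (S : R * R -> Prop) : Prop :=
  forall x, S x -> forall y, component2 S x y <-> y = x.

Definition graph (f : R -> R) : R * R -> Prop := fun p => snd p = f (fst p).

(* Main.v *)
Require Import Defs.
From Stdlib Require Import Reals QArith Qreals List Lra Lia Znumtheory Classical.
Open Scope R_scope.

Definition isQ (x : R) := exists q : Q, x = Q2R q.

Lemma Q2R0 : Q2R 0 = 0. Proof. unfold Q2R; simpl; field. Qed.
Lemma Q2R1 : Q2R 1 = 1. Proof. unfold Q2R; simpl; field. Qed.

Lemma isQ_plus x y : isQ x -> isQ y -> isQ (x + y).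
Proof. intros [a ->] [b ->]. exists (a + b)%Q. now rewrite Q2R_plus. Qed.
Lemma isQ_mult x y : isQ x -> isQ y -> isQ (x * y).
Proof. intros [a ->] [b ->]. exists (a * b)%Q. now rewrite Q2R_mult. Qed.
Lemma isQ_pow x n : isQ x -> isQ (x ^ n).
Proof. intros H. induction n; simpl. exists 1%Q. now rewrite Q2R1. now apply isQ_mult. Qed.

Lemma Q_dense a b : a < b -> exists q, a < Q2R q < b.
Proof.
  intros Hab.
  destruct (archimed (/ (b - a))) as [HN1 _].
  set (N := up (/ (b - a))) in *.
  assert (Hi : / (b - a) > 0) by (apply Rinv_0_lt_compat; lra).
  assert (HNpos : IZR N > 0) by lra.
  assert (HN : (0 < N)%Z) by (apply lt_0_IZR; lra).
  assert (HbN : (b - a) * IZR N > 1).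
  { replace 1 with ((b - a) * / (b - a)) by (field; lra).
    apply Rmult_lt_compat_l; lra. }
  destruct (archimed (a * IZR N)) as [Hm1 Hm2].
  set (m := up (a * IZR N)) in *.
  exists (Qmake m (Z.to_pos N)). unfold Q2R; simpl.
  rewrite Z2Pos.id by lia.
  split.
  - apply (Rmult_lt_reg_r (IZR N)); [lra|].
    rewrite Rmult_assoc, Rinv_l, Rmult_1_r by lra. lra.
  - apply (Rmult_lt_reg_r (IZR N)); [lra|].
    rewrite Rmult_assoc, Rinv_l, Rmult_1_r by lra. lra.
Qed.

Lemma no_sqrt2_Z : forall k : nat, forall p q : Z, (0 < q)%Z -> (Z.to_nat q <= k)%nat ->
  (p * p = 2 * (q * q))%Z -> False.
Proof.
  induction k; intros p q Hq Hk H.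
  - lia.
  - assert (Hp : (2 | p)%Z).
    { destruct (prime_mult 2 prime_2 p p) as [h|h]; auto. exists (q * q)%Z. lia. }
    destruct Hp as [p' ->].
    assert (Hq2 : (q * q = 2 * (p' * p'))%Z) by nia.
    assert (Hq' : (2 | q)%Z).
    { destruct (prime_mult 2 prime_2 q q) as [h|h]; auto. exists (p' * p')%Z. lia. }
    destruct Hq' as [q' ->].
    apply (IHk p' q'); [lia | lia | nia].
Qed.

Lemma sqrt2_irr : forall q, sqrt 2 <> Q2R q.
Proof.
  intros q H.
  assert (H2 : Q2R (q * q) = Q2R 2).
  { rewrite Q2R_mult, <- H, sqrt_sqrt by lra. unfold Q2R; simpl; field. }
  apply eqR_Qeq in H2. destruct q as [p d]. unfold Qeq, Qmult in H2; simpl in H2.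
  rewrite Pos2Z.inj_xO, Pos2Z.inj_mul in H2.
  apply (no_sqrt2_Z (Z.to_nat (Zpos d)) p (Zpos d)); lia.
Qed.

Lemma qcomb_all1 : forall l : list (Q * R), Forall (fun p => snd p = 1) l -> isQ (qcomb l).
Proof.
  induction l as [|[q b] l IH]; intros H; simpl.
  - exists 0%Q. now rewrite Q2R0.
  - inversion H; subst. simpl in *. subst. apply isQ_plus; [|auto].
    exists q. ring.
Qed.

Lemma exists_b0 gamma : hamel_basis gamma -> exists b0, gamma b0 /\ b0 <> 1.
Proof.
  intros [_ Hs]. apply NNPP; intro Hn.
  assert (Hall : forall b, gamma b -> b = 1).
  { intros b Hb. destruct (Req_dec b 1); auto. exfalso; apply Hn; eauto. }
  destruct (Hs (sqrt 2)) as [l [Hl Heq]].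
  assert (Hq : isQ (qcomb l)).
  { apply qcomb_all1. eapply Forall_impl; [|exact Hl]. intros a Ha; simpl; auto. }
  destruct Hq as [q Hq]. apply (sqrt2_irr q). congruence.
Qed.

Lemma b0_irr gamma b0 : Q_lin_indep gamma -> gamma 1 -> gamma b0 -> b0 <> 1 ->
  forall q, b0 <> Q2R q.
Proof.
  intros Hi H1 Hb0 Hne q Heq.
  specialize (Hi ((1%Q, b0) :: ((- q)%Q, 1) :: nil)).
  assert (HF : Forall (fun p : Q * R => (fst p == 0)%Q) ((1%Q, b0) :: ((- q)%Q, 1) :: nil)).
  { apply Hi.
    - simpl. constructor.
      + simpl. intros [H|H]; [congruence|contradiction].
      + constructor; [simpl; auto | constructor].
    - repeat constructor; simpl; auto.
    - unfold qcomb; simpl. rewrite Q2R_opp, Heq, Q2R1. ring. }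
  inversion HF as [|? ? H2 _]. simpl in H2. compute in H2. discriminate.
Qed.

Lemma A0 A : Q_linear A -> A 0 = 0.
Proof. intros [Ha _]. pose proof (Ha 0 0) as H. rewrite Rplus_0_l in H. lra. Qed.

Lemma A_Q A : Q_linear A -> A 1 = 1 -> forall q, A (Q2R q) = Q2R q.
Proof. intros [_ Hm] H1 q. pose proof (Hm q 1) as H. rewrite Rmult_1_r, H1 in H. lra. Qed.

Lemma A_isQ gamma A : hamel_basis gamma -> Q_linear A -> A 1 = 1 ->
  (forall b, gamma b -> b <> 1 -> A b = 0) -> forall x, isQ (A x).
Proof.
  intros [_ Hs] HA H1 Hoth x.
  destruct (Hs x) as [l [Hl <-]].
  induction l as [|[q b] l IH]; simpl.
  - rewrite (A0 A HA). exists 0%Q. now rewrite Q2R0.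
  - inversion Hl; subst. simpl in *.
    destruct HA as [Ha Hm]. rewrite Ha, Hm.
    apply isQ_plus; [|auto].
    apply isQ_mult; [exists q; auto|].
    destruct (Req_dec b 1) as [->|Hne].
    + rewrite H1. exists 1%Q. now rewrite Q2R1.
    + rewrite Hoth by auto. exists 0%Q. now rewrite Q2R0.
Qed.

Lemma Kdense b0 : b0 <> 0 -> forall c d, c < d -> exists q, c < Q2R q * b0 < d.
Proof.
  intros Hb c d Hcd.
  destruct (Rlt_dec 0 b0) as [Hp|Hn].
  - destruct (Q_dense (c / b0) (d / b0)) as [q [H1 H2]].
    { apply Rmult_lt_compat_r; [apply Rinv_0_lt_compat|]; lra. }
    exists q. set (t := Q2R q) in *.
    set (u := c / b0) in *. set (v := d / b0) in *.
    assert (u * b0 = c) by (unfold u; field; lra).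
    assert (v * b0 = d) by (unfold v; field; lra).
    split; nra.
  - assert (Hn' : b0 < 0) by lra.
    destruct (Q_dense (d / b0) (c / b0)) as [q [H1 H2]].
    { unfold Rdiv. rewrite (Rmult_comm d), (Rmult_comm c). apply Rmult_lt_gt_compat_neg_l; [apply Rinv_lt_0_compat; lra|lra]. }
    exists q. set (t := Q2R q) in *.
    set (u := c / b0) in *. set (v := d / b0) in *.
    assert (u * b0 = c) by (unfold u; field; lra).
    assert (v * b0 = d) by (unfold v; field; lra).
    split; nra.
Qed.

Lemma irr_between b0 : (forall q, b0 <> Q2R q) -> forall a b, a < b ->
  exists r, a < r < b /\ forall t, r <> Q2R t.
Proof.
  intros Hirr a b Hab.
  assert (Hb0 : b0 <> 0) by (intro E; apply (Hirr 0%Q); rewrite Q2R0; auto).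
  assert (Key : forall q, Q2R q * b0 <> 0 -> forall t, Q2R q * b0 <> Q2R t).
  { intros q Hq t Ht.
    assert (Hq0 : ~ (q == 0)%Q).
    { intro E. apply Qeq_eqR in E. rewrite Q2R0 in E. rewrite E in Hq. lra. }
    assert (Q2R q <> 0) by (intro E; rewrite E in Hq; lra).
    apply (Hirr (t / q)%Q). rewrite Q2R_div by auto. rewrite <- Ht. field. auto. }
  destruct (Rlt_dec 0 b) as [Hp|Hn].
  - destruct (Kdense b0 Hb0 (Rmax a 0) b) as [q [H1 H2]].
    { apply Rmax_lub_lt; lra. }
    pose proof (Rmax_l a 0). pose proof (Rmax_r a 0).
    exists (Q2R q * b0). split; [lra|]. apply Key. lra.
  - destruct (Kdense b0 Hb0 a b Hab) as [q [H1 H2]].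
    exists (Q2R q * b0). split; [lra|]. apply Key. lra.
Qed.

Lemma deltan_shift : forall k h f a x,
  deltan k h (fun y => f (y + a)) x = deltan k h f (x + a).
Proof.
  induction k; intros h f a x; simpl; auto.
  rewrite !IHk. replace (x + h + a) with (x + a + h) by ring. auto.
Qed.

Lemma deltan_sub : forall k h f g x,
  deltan k h (fun y => f y - g y) x = deltan k h f x - deltan k h g x.
Proof. induction k; intros; simpl; auto. rewrite !IHk. ring. Qed.

Lemma deltan_S' : forall k h f x,
  deltan (S k) h f x = deltan k h (fun y => f (y + h) - f y) x.
Proof. intros. rewrite deltan_sub, deltan_shift. reflexivity. Qed.

Lemma deltan_comp A : (forall x y, A (x + y) = A x + A y) ->
  forall k h g x, deltan k h (fun y => g (A y)) x = deltan k (A h) g (A x).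
Proof. intros Ha. induction k; intros; simpl; auto. rewrite !IHk, Ha. auto. Qed.

Fixpoint PD (m : nat) (c : R) (f : R -> R) : Prop :=
  match m with
  | O => forall y, f y = c
  | S m' => forall h, PD m' (INR m * c * h) (fun y => f (y + h) - f y)
  end.

Lemma PD_delta : forall m c f h x, PD m c f -> deltan m h f x = INR (Factorial.fact m) * c * h ^ m.
Proof.
  induction m; intros c f h x H.
  - simpl in *. rewrite H. ring.
  - rewrite deltan_S'. rewrite (IHm _ _ h x (H h)).
    change (Factorial.fact (S m)) with (S m * Factorial.fact m)%nat.
    rewrite mult_INR. simpl pow. ring.
Qed.

Lemma PD_ext : forall m c f g, PD m c f -> (forall y, f y = g y) -> PD m c g.
Proof.
  induction m; intros c f g H E; simpl in *.
  - intros y. rewrite <- E. auto.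
  - intros h. apply (IHm _ _ _ (H h)). intros y. rewrite !E. auto.
Qed.

Lemma PD_coef : forall m c d f, PD m c f -> c = d -> PD m d f.
Proof. intros; subst; auto. Qed.

Lemma PD_add : forall m a b f g, PD m a f -> PD m b g -> PD m (a + b) (fun y => f y + g y).
Proof.
  induction m; intros a b f g Hf Hg; simpl in *.
  - intros y. rewrite Hf, Hg. auto.
  - intros h. eapply PD_coef; [eapply PD_ext; [apply (IHm _ _ _ _ (Hf h) (Hg h))|]|].
    + intros y. simpl. ring.
    + ring.
Qed.

Lemma PD_scale : forall m a k f, PD m a f -> PD m (k * a) (fun y => k * f y).
Proof.
  induction m; intros a k f Hf; simpl in *.
  - intros y. rewrite Hf. auto.
  - intros h. eapply PD_coef; [eapply PD_ext; [apply (IHm _ k _ (Hf h))|]|].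
    + intros y. simpl. ring.
    + ring.
Qed.

Lemma PD_shift : forall m a t f, PD m a f -> PD m a (fun y => f (y + t)).
Proof.
  induction m; intros a t f Hf; simpl in *.
  - intros y. rewrite Hf. auto.
  - intros h. eapply PD_ext; [apply (IHm _ t _ (Hf h))|].
    intros y. simpl. replace (y + h + t) with (y + t + h) by ring. auto.
Qed.

Lemma PD_mulx : forall m c f, PD m c f -> PD (S m) c (fun y => y * f y).
Proof.
  induction m; intros c f Hf.
  - simpl in *. intros h y. rewrite !Hf. ring.
  - intros h.
    assert (H1 := IHm _ _ (Hf h)).
    assert (H2 : PD (S m) (h * c) (fun y => h * f (y + h))).
    { apply PD_scale. apply PD_shift. auto. }
    eapply PD_coef; [eapply PD_ext; [apply (PD_add _ _ _ _ _ H1 H2)|]|].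
    + intros y. simpl. ring.
    + rewrite (S_INR (S m)). ring.
Qed.

Lemma PD_pow : forall n, PD n 1 (fun y => y ^ n).
Proof.
  induction n.
  - simpl. auto.
  - eapply PD_ext; [apply PD_mulx; apply IHn|]. intros; simpl; auto.
Qed.

Lemma dist_fst p q : Rabs (fst p - fst q) <= dist2 p q.
Proof.
  unfold dist2. rewrite <- sqrt_Rsqr_abs. apply sqrt_le_1_alt. unfold Rsqr.
  pose proof (pow2_ge_0 (snd p - snd q)). nra.
Qed.
Lemma dist_snd p q : Rabs (snd p - snd q) <= dist2 p q.
Proof.
  unfold dist2. rewrite <- sqrt_Rsqr_abs. apply sqrt_le_1_alt. unfold Rsqr.
  pose proof (pow2_ge_0 (fst p - fst q)). nra.
Qed.

Lemma open_proj (g : R * R -> R) : (forall p q, Rabs (g p - g q) <= dist2 p q) ->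
  forall s, open2 (fun p => g p < s) /\ open2 (fun p => g p > s).
Proof.
  intros Hg s. split; intros p Hp.
  - exists (s - g p). split; [lra|]. intros q Hq.
    pose proof (Hg p q). pose proof (Rle_abs (g q - g p)). rewrite Rabs_minus_sym in H0. lra.
  - exists (g p - s). split; [lra|]. intros q Hq.
    pose proof (Hg p q). pose proof (Rle_abs (g p - g q)). lra.
Qed.

Lemma open_or U V : open2 U -> open2 V -> open2 (fun p => U p \/ V p).
Proof.
  intros HU HV p [H|H].
  - destruct (HU p H) as [e [He Hq]]. exists e. split; auto.
  - destruct (HV p H) as [e [He Hq]]. exists e. split; auto.
Qed.

Lemma open_and U V : open2 U -> open2 V -> open2 (fun p => U p /\ V p).
Proof.
  intros HU HV p [H1 H2].
  destruct (HU p H1) as [e1 [He1 Hq1]]. destruct (HV p H2) as [e2 [He2 Hq2]].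
  exists (Rmin e1 e2). split; [apply Rmin_pos; auto|].
  intros q Hq. pose proof (Rmin_l e1 e2). pose proof (Rmin_r e1 e2).
  split; [apply Hq1|apply Hq2]; lra.
Qed.

Lemma sep C U V p q : open2 U -> open2 V -> (forall p, C p -> U p \/ V p) ->
  (forall p, C p -> U p -> V p -> False) -> C p -> U p -> C q -> V q -> ~ connected2 C.
Proof.
  intros HU HV Hcov Hdis Cp Up Cq Vq Hc. apply Hc.
  exists U, V. repeat split; eauto.
Qed.

Theorem mainTheorem4 (gamma : R -> Prop) (A : R -> R) (n : nat) :
  hamel_basis gamma -> gamma 1 ->
  Q_linear A -> A 1 = 1 -> (forall b, gamma b -> b <> 1 -> A b = 0) ->
  (1 <= n)%nat ->
  ~ continuity (fun x => A x ^ n) /\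
  monomial_fun n (fun x => A x ^ n) /\
  totally_disconnected2 (graph (fun x => A x ^ n)).
Proof.
  intros Hb H1 HA HA1 Hoth Hn.
  destruct (exists_b0 gamma Hb) as [b0 [Hgb0 Hb0ne]].
  assert (Hirr := b0_irr gamma b0 (proj1 Hb) H1 Hgb0 Hb0ne).
  assert (Hb0z : b0 <> 0) by (intro E; apply (Hirr 0%Q); rewrite Q2R0; auto).
  assert (HAb0 : A b0 = 0) by auto.
  assert (HAk : forall q, A (Q2R q * b0) = 0).
  { intros q. rewrite (proj2 HA), HAb0. ring. }
  assert (fQ : forall t, isQ (A t ^ n)).
  { intros t. apply isQ_pow. apply (A_isQ gamma A Hb HA HA1 Hoth). }
  assert (Hs : forall a b (r0 : Q), a < b -> exists s, a < s < b /\ A s = Q2R r0).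
  { intros a b r0 Hab.
    destruct (Kdense b0 Hb0z (a - Q2R r0) (b - Q2R r0)) as [q [Hq1 Hq2]]; [lra|].
    exists (Q2R r0 + Q2R q * b0). split; [lra|].
    rewrite (proj1 HA), HAk, (A_Q A HA HA1). ring. }
  assert (Hne : forall (p : R * R) t, snd p = A t ^ n -> forall r, (forall t, r <> Q2R t) -> snd p <> r).
  { intros p t Ht r Hr E. destruct (fQ t) as [u Hu]. apply (Hr u). congruence. }
  split; [|split].
  -
    intros Hc. specialize (Hc 1).
    unfold continuity_pt, continue_in, limit1_in, limit_in in Hc.
    destruct (Hc (1/2)) as [alp [Halp H]]; [lra|].
    destruct (Kdense b0 Hb0z (1 - alp) 1) as [q [Hq1 Hq2]]; [lra|].
    specialize (H (Q2R q * b0)).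
    assert (Hd : D_x no_cond 1 (Q2R q * b0) /\ R_dist (Q2R q * b0) 1 < alp).
    { split.
      - unfold D_x, no_cond. split; auto. lra.
      - unfold R_dist. rewrite Rabs_left by lra. lra. }
    specialize (H Hd). simpl in H. unfold R_dist in H.
    rewrite HAk, HA1, pow1, pow_i in H by lia.
    rewrite Rabs_left in H by lra. lra.
  -
    intros x h.
    rewrite (deltan_comp A (proj1 HA) n h (fun y => y ^ n) x).
    rewrite (PD_delta n 1 _ (A h) (A x) (PD_pow n)).
    field. apply INR_fact_neq_0.
  -
    intros x Sx y. split.
    + intros [C [HCS [Hc [Cx Cy]]]].
      assert (Sy : graph (fun x => A x ^ n) y) by (apply HCS; auto).
      destruct x as [x1 x2], y as [y1 y2]. unfold graph in *; simpl in *.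
      assert (Hdiff : forall p q : R * R, C p -> C q -> snd p < snd q -> False).
      { intros p q Cp Cq Hpq; simpl in *.
        destruct (irr_between b0 Hirr (snd p) (snd q) Hpq) as [r [Hr Hri]].
        apply (sep C (fun p : R * R => snd p < r) (fun p : R * R => snd p > r) p q).
        - apply (open_proj snd dist_snd r).
        - apply (open_proj snd dist_snd r).
        - intros u Cu. pose proof (HCS u Cu) as G. unfold graph in G.
          pose proof (Hne u (fst u) G r Hri). lra.
        - intros u _ H3 H4. lra.
        - auto. - simpl; lra. - auto. - simpl; lra. - auto. }
      assert (Hsame : forall a b v, a < b -> C (a, v) -> C (b, v) -> False).
      { intros a b v Hab Ca Cb.
        destruct (Q_dense (Rmax 1 v + 1) (Rmax 1 v + 2)) as [q0 [Hq1 Hq2]]; [lra|].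
        pose proof (Rmax_l 1 v). pose proof (Rmax_r 1 v).
        destruct (Hs a b q0 Hab) as [s [Hs1 HAs]].
        assert (Hw : Q2R q0 <= Q2R q0 ^ n).
        { rewrite <- (pow_1 (Q2R q0)) at 1. apply Rle_pow; [lra|lia]. }
        destruct (irr_between b0 Hirr v (Q2R q0 ^ n)) as [r [Hr Hri]]; [lra|].
        apply (sep C (fun p : R * R => fst p < s \/ snd p > r) (fun p : R * R => fst p > s /\ snd p < r) (a, v) (b, v)).
        - apply open_or; apply (open_proj _ dist_fst s) || apply (open_proj _ dist_snd r).
        - apply open_and; apply (open_proj _ dist_fst s) || apply (open_proj _ dist_snd r).
        - intros u Cu. pose proof (HCS u Cu) as G. unfold graph in G.
          pose proof (Hne u (fst u) G r Hri).
          destruct (total_order_T (fst u) s) as [[Hlt|Hequ]|Hgt].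
          + left; left; auto.
          + left; right. rewrite G, Hequ, HAs. lra.
          + destruct (Rlt_dec (snd u) r); [right; split; auto | left; right; lra].
        - intros u _ [H3|H3] [H4 H5]; lra.
        - auto. - simpl; left; lra. - auto. - simpl; split; lra.
        - auto. }
      destruct (total_order_T x2 y2) as [[Hlt|Hequ]|Hgt].
      * exfalso. apply (Hdiff (x1, x2) (y1, y2)); auto.
      * rewrite <- Hequ in Cy, Sy |- *. destruct (total_order_T x1 y1) as [[Hlt2|Hequ2]|Hgt2].
        -- exfalso. apply (Hsame x1 y1 x2); auto.
        -- subst; auto.
        -- exfalso. apply (Hsame y1 x1 x2); auto.
      * exfalso. apply (Hdiff (y1, y2) (x1, x2)); auto.
    + intros ->. exists (fun p => p = x). repeat split; auto.
      * intros p ->. auto.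
      * intros [U [V [_ [_ [_ [[p [E1 Up]] [[q [E2 Vq]] Hd]]]]]]]. rewrite E1 in Up. rewrite E2 in Vq.
        apply (Hd x eq_refl); auto.
Qed.
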